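(* Suppose $|\mathit{Obs}|>1$ and $m\ge1$. Then, over the class of all $m$-agent models, CTL*KΔ$_m$ is strictly more expressive than CTL*K$_m$: every CTL*K$_m$ formula is equivalent to some CTL*KΔ$_m$ formula, but there is a CTL*KΔ$_m$ formula that is not equivalent to any CTL*K$_m$ formula. Here two formulas $\varphi,\varphi'$ are equivalent if for every $m$-agent model $M$, $M\models\varphi$ iff $M\models\varphi'$.
   Context: Fix a countably infinite set $\mathit{AP}$ of atomic propositions, a finite nonempty set $\mathit{Obs}$ of observations, and a finite set of agents $\mathit{Ag}=\{a_1,\dots,a_m\}$. For a word $w$ we write $w_i$ for its letter at position $i$ (positions start at $0$), $w_{\le i}$ for its prefix ending at position $i$, $|w|$ for its length (finite words) and $\mathit{last}(w)$ for its last letter; $w\preceq w'$ means $w$ is a prefix of $w'$. Syntax of CTL*KΔ$_m$: history formulas $\varphi::=p\mid\neg\varphi\mid\varphi\wedge\varphi\mid\mathbf A\psi\mid\mathbf K_a\varphi\mid\Delta^{o}_a\varphi$ and path formulas $\psi::=\varphi\mid\neg\psi\mid\psi\wedge\psi\mid\mathbf X\psi\mid\psi\,\mathbf U\,\psi$, with $p\in\mathit{AP}$, $a\in\mathit{Ag}$, $o\in\mathit{Obs}$; formulas are history formulas. CTL*K$_m$ is the fragment of formulas containing no operator $\Delta^o_a$. A multiagent ($m$-agent) model is $M=(\mathit{AP}_f,S,T,V,\{\sim_o\}_{o\in\mathit{Obs}},s_\iota,\vec o_\iota)$ where $\mathit{AP}_f\subseteq\mathit{AP}$ is finite, $S$ is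 a finite set of states, $T\subseteq S\times S$ is left-total, $V:S\to2^{\mathit{AP}_f}$, each $\sim_o$ is an equivalence relation on $S$, $s_\iota\in S$, and $\vec o_\iota=(\vec o_{\iota,a})_{a\in\mathit{Ag}}\in\mathit{Obs}^{\mathit{Ag}}$ gives each agent an initial observation. Paths are infinite sequences of states $s_0s_1\dots$ with $s_iTs_{i+1}$ (starting anywhere); histories are finite nonempty prefixes of paths. An observation record is a finite word over $\mathit{Obs}\times\mathbb N$; $r_{=n}$ is the subword of $r$ consisting of the pairs with second component $n$. A record tuple is $\vec r=(\vec r_a)_{a\in\mathit{Ag}}$; $\vec r\cdot(o,n)_a$ is $\vec r$ with $\vec r_a$ replaced by $\vec r_a\cdot(o,n)$; $\vec\epsilon$ is the tuple of empty records. For agent $a$: $\mathit{ol}_a(\vec r,0)=\vec o_{\iota,a}\cdot o_1\cdots o_k$ if $(\vec r_a)_{=0}=(o_1,0)\cdots(o_k,0)$, and $\mathit{ol}_a(\vec r,n+1)=\mathit{last}(\mathit{ol}_a(\vec r,n))\cdot o_1\cdots o_k$ if $(\vec r_a)_{=n+1}=(o_1,n+1)\cdots(o_k,n+1)$. $h\approx^{\vec r}_a h'$ iff $|h|=|h'|$ and for all $i<|h|$ and all $o$ in $\mathit{ol}_a(\vec r,i)$, $h_i\sim_o h'_i$. Natural semantics: $h,\vec r\models p$ iff $p\in V(\mathit{last}(h))$; negation and conjunction as usual; $h,\vec r\models\mathbf A\psi$ iff for all paths $\pi$ with $h\preceq\pi$, $\pi,|h|-1,\vec r\models\psi$; $h,\vec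 r\models\mathbf K_a\varphi$ iff $h',\vec r\models\varphi$ for all histories $h'\approx^{\vec r}_a h$; $h,\vec r\models\Delta^o_a\varphi$ iff $h,\vec r\cdot(o,|h|-1)_a\models\varphi$; $\pi,n,\vec r\models\varphi$ iff $\pi_{\le n},\vec r\models\varphi$; negation and conjunction as usual; $\pi,n,\vec r\models\mathbf X\psi$ iff $\pi,n+1,\vec r\models\psi$; $\pi,n,\vec r\models\psi_1\mathbf U\psi_2$ iff there is $m'\ge n$ with $\pi,m',\vec r\models\psi_2$ and $\pi,j,\vec r\models\psi_1$ for all $n\le j<m'$. $M\models\varphi$ iff $s_\iota,\vec\epsilon\models\varphi$ ($s_\iota$ viewed as a one-state history). *)

(* Defs.v *)
From mathcomp Require Import all_boot.
Set Implicit Arguments.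
Unset Strict Implicit.
Unset Printing Implicit Defensive.

Section CTLKDelta.
Variable Obs : finType.
Variable m : nat.

(* Atomic propositions: AP = nat (countably infinite). *)
Inductive hform : Type :=
| HAtom of nat
| HNeg of hform
| HAnd of hform & hform
| HA of pform
| HK of 'I_m & hform
| HDelta of 'I_m & Obs & hform
with pform : Type :=
| PH of hform
| PNeg of pform
| PAnd of pform & pform
| PX of pform
| PU of pform & pform.

(* The CTL*K_m fragment: no Delta operator. *)
Fixpoint noDeltaH (f : hform) : bool :=
  match f with
  | HAtom _ => true
  | HNeg g => noDeltaH g
  | HAnd g1 g2 => noDeltaH g1 && noDeltaH g2
  | HA p => noDeltaP p
  | HK _ g => noDeltaH g
  | HDelta _ _ _ => false
  end
with noDeltaP (p : pform) : bool :=
  match p with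
  | PH g => noDeltaH g
  | PNeg q => noDeltaP q
  | PAnd q1 q2 => noDeltaP q1 && noDeltaP q2
  | PX q => noDeltaP q
  | PU q1 q2 => noDeltaP q1 && noDeltaP q2
  end.

Record model : Type := Model {
  mS : finType;
  mT : rel mS;
  mT_total : forall s, exists s', mT s s';
  mAPf : seq nat;
  mV : mS -> pred nat;
  mV_sub : forall s p, mV s p -> p \in mAPf;
  mSim : Obs -> rel mS;
  mSim_refl : forall o, reflexive (mSim o);
  mSim_sym : forall o, symmetric (mSim o);
  mSim_trans : forall o, transitive (mSim o);
  mInit : mS;
  mObsInit : 'I_m -> Obs
}.

Arguments mSim : clear implicits.
Arguments mInit : clear implicits.
Arguments mObsInit : clear implicits.
Arguments mT : clear implicits.
Arguments mV : clear implicits.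

Definition orecord := seq (Obs * nat).
Definition rtuple := 'I_m -> orecord.

Definition rempty : rtuple := fun _ => [::].

Definition rupd (r : rtuple) (a : 'I_m) (o : Obs) (n : nat) : rtuple :=
  fun b => if b == a then rcons (r a) (o, n) else r b.

Definition obs_at (ra : orecord) (n : nat) : seq Obs :=
  [seq x.1 | x <- ra & x.2 == n].

Fixpoint ol (oi : Obs) (ra : orecord) (n : nat) : seq Obs :=
  match n with
  | 0 => oi :: obs_at ra 0
  | n'.+1 => last oi (ol oi ra n') :: obs_at ra n'.+1
  end.

Section Semantics.
Variable M : model.
Local Notation S := (mS M).

Definition is_path (pi : nat -> S) : Prop := forall i, mT M (pi i) (pi i.+1).

Definition is_hist (h : seq S) : Prop :=
  h <> [::] /\
  forall i, i.+1 < size h -> mT M (nth (mInit M) h i) (nth (mInit M) h i.+1).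

Definition approx (a : 'I_m) (r : rtuple) (h h' : seq S) : Prop :=
  size h = size h' /\
  forall i, i < size h -> forall o, o \in ol (mObsInit M a) (r a) i ->
    mSim M o (nth (mInit M) h i) (nth (mInit M) h' i).

Definition prefix (pi : nat -> S) (n : nat) : seq S := mkseq pi n.+1.

Fixpoint hsat (h : seq S) (r : rtuple) (f : hform) {struct f} : Prop :=
  match f with
  | HAtom p => mV M (last (mInit M) h) p
  | HNeg g => ~ hsat h r g
  | HAnd g1 g2 => hsat h r g1 /\ hsat h r g2
  | HA q => forall pi, is_path pi ->
              (forall i, i < size h -> pi i = nth (mInit M) h i) ->
              psat pi (size h).-1 r q
  | HK a g => forall h', is_hist h' -> approx a r h' h -> hsat h' r g
  | HDelta a o g => hsat h (rupd r a o (size h).-1) g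
  end
with psat (pi : nat -> S) (n : nat) (r : rtuple) (q : pform) {struct q} : Prop :=
  match q with
  | PH g => hsat (prefix pi n) r g
  | PNeg q1 => ~ psat pi n r q1
  | PAnd q1 q2 => psat pi n r q1 /\ psat pi n r q2
  | PX q1 => psat pi n.+1 r q1
  | PU q1 q2 => exists m', n <= m' /\ psat pi m' r q2 /\
                  (forall j, n <= j < m' -> psat pi j r q1)
  end.

Definition models (f : hform) : Prop := hsat [:: mInit M] rempty f.

End Semantics.

Definition equivalent (f g : hform) : Prop :=
  forall M : model, models M f <-> models M g.

End CTLKDelta.

(* Main.v *)
Require Import Defs.
From mathcomp Require Import all_boot.

Scheme hform_mut := Induction for hform Sort Prop
with pform_mut := Induction for pform Sort Prop.

Section Aux.
Variable Obs : finType.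
Variable m : nat.
Variable o0 : Obs.

Lemma ol_nil (n : nat) : ol o0 [::] n = [:: o0].
Proof. by elim: n => [|n IH] //=; rewrite IH. Qed.

Lemma tot (s : bool) : exists s', (fun _ _ : bool => true) s s'.
Proof. by exists s. Qed.

Lemma vsub (s : bool) (p : nat) : (fun s p => s && (p == 0)) s p -> p \in [:: 0].
Proof. by case: s => //= /eqP ->. Qed.

Definition mkM (sim : Obs -> rel bool)
  (Hr : forall o, reflexive (sim o)) (Hs : forall o, symmetric (sim o))
  (Ht : forall o, transitive (sim o)) : model Obs m :=
  @Model Obs m bool (fun _ _ => true) tot [:: 0]
    (fun s p => s && (p == 0)) vsub sim Hr Hs Ht true (fun _ => o0).

Variables (sim1 sim2 : Obs -> rel bool)
  (Hr1 : forall o, reflexive (sim1 o)) (Hs1 : forall o, symmetric (sim1 o))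
  (Ht1 : forall o, transitive (sim1 o))
  (Hr2 : forall o, reflexive (sim2 o)) (Hs2 : forall o, symmetric (sim2 o))
  (Ht2 : forall o, transitive (sim2 o)).
Hypothesis Heq : forall x y, sim1 o0 x y = sim2 o0 x y.

Let M1 := @mkM sim1 Hr1 Hs1 Ht1.
Let M2 := @mkM sim2 Hr2 Hs2 Ht2.

Lemma approx_eq a (h h' : seq bool) :
  approx (M:=M1) a (@rempty Obs m) h h' <-> approx (M:=M2) a (@rempty Obs m) h h'.
Proof.
rewrite /approx /rempty; split=> [][E H]; split=> // i Hi o;
  rewrite ol_nil inE => /eqP -> ; have := H i Hi o0; rewrite ol_nil inE eqxx => /(_ isT);
  by rewrite /= Heq.
Qed.

Lemma noDelta_same :
  forall g : hform Obs m, noDeltaH g -> forall h : seq bool,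
    hsat (M:=M1) h (@rempty Obs m) g <-> hsat (M:=M2) h (@rempty Obs m) g.
Proof.
apply: (@hform_mut Obs m
  (fun g => noDeltaH g -> forall h : seq bool,
    hsat (M:=M1) h (@rempty Obs m) g <-> hsat (M:=M2) h (@rempty Obs m) g)
  (fun q => noDeltaP q -> forall (pi : nat -> bool) n,
    psat (M:=M1) pi n (@rempty Obs m) q <-> psat (M:=M2) pi n (@rempty Obs m) q)).
- by move=> p _ h.
- move=> g IH /= /IH H h; split=> X Y; apply: X; apply/H; exact: Y.
- move=> g1 IH1 g2 IH2 /= /andP[/IH1 H1 /IH2 H2] h.
  by split=> [][X Y]; split; [apply/H1|apply/H2|apply/H1|apply/H2].
- move=> q IH /= /IH H h; split=> X pi Hp Hpre; apply/H; exact: X.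
- move=> a g IH /= /IH H h; split=> X h' Hh' Ha; apply/H; apply: X => //;
  by apply/approx_eq.
- by [].
- move=> g IH /= /IH H pi n; exact: H.
- move=> q IH /= /IH H pi n; split=> X Y; apply: X; apply/H; exact: Y.
- move=> q1 IH1 q2 IH2 /= /andP[/IH1 H1 /IH2 H2] pi n.
  by split=> [][X Y]; split; [apply/H1|apply/H2|apply/H1|apply/H2].
- move=> q IH /= /IH H pi n; exact: H.
- move=> q1 IH1 q2 IH2 /= /andP[/IH1 H1 /IH2 H2] pi n; split;
  move=> [k [Hk [X Y]]]; exists k; (split; [done|split]).
  + by apply/H2.
  + by move=> j Hj; apply/H1; exact: Y.
  + by apply/H2.
  + by move=> j Hj; apply/H1; exact: Y.
Qed.

End Aux.

Theorem mainTheorem11 (Obs : finType) (m : nat) :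
  1 < #|Obs| -> 1 <= m ->
  (forall f : hform Obs m, noDeltaH f -> exists g : hform Obs m, equivalent f g) /\
  (exists f : hform Obs m, forall g : hform Obs m, noDeltaH g -> ~ equivalent f g).
Proof.
move=> /card_gt1P [o0 [o1 [_ _ Hne]]] Hm.
split; first by move=> f _; exists f.
set a : 'I_m := Ordinal Hm.
exists (HDelta a o1 (HK a (HAtom _ _ 0))) => g Hg Heqv.
pose sim1 := fun (_ : Obs) (_ _ : bool) => true.
pose sim2 := fun (o : Obs) (x y : bool) => if o == o0 then true else x == y.
have Hr1 : forall o, reflexive (sim1 o) by [].
have Hs1 : forall o, symmetric (sim1 o) by [].
have Ht1 : forall o, transitive (sim1 o) by [].
have Hr2 : forall o, reflexive (sim2 o) by move=> o x; rewrite /sim2; case: ifP.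
have Hs2 : forall o, symmetric (sim2 o)
  by move=> o x y; rewrite /sim2; case: ifP => // _; exact: eq_sym.
have Ht2 : forall o, transitive (sim2 o)
  by move=> o x y z; rewrite /sim2; case: ifP => // _ /eqP -> .
have Heq : forall x y, sim1 o0 x y = sim2 o0 x y by move=> x y; rewrite /sim2 eqxx.
pose M1 := @mkM Obs m o0 sim1 Hr1 Hs1 Ht1.
pose M2 := @mkM Obs m o0 sim2 Hr2 Hs2 Ht2.
have HM : models M1 g <-> models M2 g.
  exact: (@noDelta_same Obs m o0 sim1 sim2 Hr1 Hs1 Ht1 Hr2 Hs2 Ht2 Heq g Hg [:: true]).
have N1 : ~ models M1 (HDelta a o1 (HK a (HAtom _ _ 0))).
  rewrite /models /= => X.
  have Hh : is_hist (M:=M1) [:: false] by split=> // -[|i].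
  have Ha : approx (M:=M1) a (rupd (@rempty Obs m) a o1 0) [:: false] [:: true].
    by split=> // i _ o _.
  by move: (X _ Hh Ha).
have P2 : models M2 (HDelta a o1 (HK a (HAtom _ _ 0))).
  rewrite /models /= => h' Hh' [Hsz H].
  case: h' Hh' Hsz H => [[]//|x [|//]] _ _ H.
  have := H 0 isT o1.
  rewrite /rupd eqxx /= /obs_at /= !inE eqxx orbT => /(_ isT).
  rewrite /sim2 eq_sym (negbTE Hne) /= => /eqP ->.
  by [].
apply: N1; apply/(Heqv M1)/HM/(Heqv M2); exact: P2.
Qed.
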